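(* Let $a,b,c\in\mathbb{C}^*$ satisfy $a,b,c,a/b,a/c,b/c\notin q^{\mathbb{Z}}$ and $$q^{\mathbb{Z}}a\cup q^{\mathbb{Z}}b\cup q^{\mathbb{Z}}\tfrac{aq}{c}\cup q^{\mathbb{Z}}\tfrac{bq}{c}=q^{\mathbb{Z}}a\cup(-q^{\mathbb{Z}}a)\cup q^{\mathbb{Z}+1/2}a\cup(-q^{\mathbb{Z}+1/2}a).$$ Let $A,B,C,D\in\mathbb{C}$ and $n,m,l,k,N,M,L,K\in\mathbb{Z}$ be such that $$Az^{n/2}\theta_q(q^Naz)+Bz^{m/2}\theta_q(-q^Maz)+Cz^{l/2}\theta_q(q^Lq^{1/2}az)+Dz^{k/2}\theta_q(-q^Kq^{1/2}az)=0$$ identically (as multivalued meromorphic functions of $z\in\mathbb{C}^*$, with $z^{j/2}$ a determination of $e^{\frac{j}{2}\log z}$). Then $A=B=C=D=0$.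
   Context: $q\in\mathbb{C}$ with $0<|q|<1$; fix $\tau$ with $q=e^{-2\pi i\tau}$ and put $q^y:=e^{-2\pi i\tau y}$ (so $q^{1/2}=e^{-\pi i\tau}$); $q^X=\{q^x:x\in X\}$. $(x;q)_\infty=\prod_{j\ge0}(1-xq^j)$ and $\theta_q(z)=(q;q)_\infty(z;q)_\infty(q/z;q)_\infty$ is the Jacobi theta function, meromorphic (holomorphic) on $\mathbb{C}^*$, with $\theta_q(qz)=-z^{-1}\theta_q(z)$. *)

(* Defs.v *)
From Stdlib Require Import Reals.
From Coquelicot Require Import Coquelicot.

Open Scope C_scope.

Definition Cexp (w : C) : C :=
  (RtoC (exp (Re w)) * (RtoC (cos (Im w)) + Ci * RtoC (sin (Im w))))%C.

Definition qpow (tau : C) (y : R) : C :=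
  Cexp ((- (RtoC 2) * RtoC PI * Ci * tau * RtoC y))%C.

Fixpoint Cpown (x : C) (n : nat) : C :=
  match n with O => 1 | S k => (Cpown x k * x)%C end.

Fixpoint qpoch_part (x q : C) (n : nat) : C :=
  match n with O => 1 | S k => (qpoch_part x q k * (1 - x * Cpown q k))%C end.

Definition qpoch (x q : C) : C :=
  @lim C_CompleteNormedModule (filtermap (qpoch_part x q) eventually).

Definition theta (q z : C) : C :=
  (qpoch q q * qpoch z q * qpoch (q / z) q)%C.

Definition in_qZ (tau : C) (x a : C) : Prop :=
  exists j : Z, x = (qpow tau (IZR j) * a)%C.
Definition in_qZhalf (tau : C) (x a : C) : Prop :=
  exists j : Z, x = (qpow tau (IZR j + /2) * a)%C.

(* Main.v *)
Require Import Defs.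
From Stdlib Require Import Reals Lra Lia Classical.
From Coquelicot Require Import Coquelicot.
Open Scope C_scope.
Lemma Cexp_plus u v : Cexp (u + v) = Cexp u * Cexp v.
Proof. unfold Cexp. apply injective_projections; simpl; unfold Re, Im;
  rewrite exp_plus, cos_plus, sin_plus; ring. Qed.
Lemma Cmod_Cexp w : Cmod (Cexp w) = exp (Re w).
Proof. unfold Cexp. rewrite Cmod_mult, Cmod_R, Rabs_pos_eq by (left; apply exp_pos).
  unfold Cmod; simpl. match goal with |- (_ * sqrt ?e = _)%R => replace e with 1%R end.
  rewrite sqrt_1; ring. pose proof (sin2_cos2 (Im w)). unfold Rsqr in H. nra. Qed.
Lemma Cexp_neq0 w : Cexp w <> 0.
Proof. intro H. pose proof (Cmod_Cexp w). rewrite H, Cmod_0 in H0. pose proof (exp_pos (Re w)). lra. Qed.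
Definition sq (tau : C) : C := (- (RtoC 2) * RtoC PI * Ci * tau)%C.
Lemma qpow_Cexp tau y : qpow tau y = Cexp (RtoC y * sq tau).
Proof. unfold qpow, sq. f_equal. ring. Qed.
Lemma qpow_plus tau x y : qpow tau (x + y) = qpow tau x * qpow tau y.
Proof. rewrite !qpow_Cexp, <- Cexp_plus. f_equal. rewrite RtoC_plus. ring. Qed.
Lemma qpow_neq0 tau y : qpow tau y <> 0.
Proof. rewrite qpow_Cexp. apply Cexp_neq0. Qed.
Definition alpha (tau : C) : R := (2 * PI * Im tau)%R.
Lemma Cmod_qpow tau y : Cmod (qpow tau y) = exp (alpha tau * y).
Proof. unfold qpow. rewrite Cmod_Cexp. f_equal. unfold alpha. simpl. unfold Im. ring. Qed.
Lemma Cmod_Cpown q n : Cmod (Cpown q n) = (Cmod q ^ n)%R.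
Proof. induction n; simpl. apply Cmod_1. rewrite Cmod_mult, IHn. ring. Qed.
Lemma Cmod_1m_le z : (Cmod (1 - z) <= 1 + Cmod z)%R.
Proof. unfold Cminus. eapply Rle_trans. apply Cmod_triangle. rewrite Cmod_opp, Cmod_1. lra. Qed.

Lemma exp_le' x y : (x <= y -> exp x <= exp y)%R.
Proof. intro H; destruct (Rle_lt_or_eq_dec _ _ H). left; apply exp_increasing; auto. subst; lra. Qed.
Lemma pow_le1' x n : (0 <= x <= 1 -> x ^ n <= 1)%R.
Proof. intro H; induction n; simpl; [lra|]. pose proof (pow_le x n ltac:(lra)). nra. Qed.
Lemma Cmod_le_ReIm z : (Cmod z <= Rabs (Re z) + Rabs (Im z))%R.
Proof. pose proof (Cmod_ge_0 z). assert (H2: (Cmod z ^ 2 = Re z ^ 2 + Im z ^ 2)%R).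
  { unfold Cmod. rewrite pow2_sqrt. reflexivity. unfold Re, Im. nra. }
  pose proof (Rabs_pos (Re z)). pose proof (Rabs_pos (Im z)).
  assert (Re z ^ 2 = Rabs (Re z) ^ 2)%R by (rewrite pow2_abs; ring).
  assert (Im z ^ 2 = Rabs (Im z) ^ 2)%R by (rewrite pow2_abs; ring).
  nra. Qed.
Lemma Cmod_1m_ge z : (1 - Cmod z <= Cmod (1 - z))%R.
Proof. pose proof (Cmod_triangle (1 - z) z). replace (1 - z + z) with (RtoC 1) in H by ring.
  rewrite Cmod_1 in H. lra. Qed.
Lemma ball_of_Cmod (x y : C) (e : R) : (Cmod (y - x) < e)%R -> @ball C_CompleteNormedModule x e y.
Proof. intro H. unfold ball; simpl. unfold prod_ball; simpl.
  pose proof (Rmax_Cmod (y - x)). pose proof (Rmax_l (Rabs (fst (y - x))) (Rabs (snd (y - x)))).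
  pose proof (Rmax_r (Rabs (fst (y - x))) (Rabs (snd (y - x)))). simpl in *.
  split; unfold ball; simpl; unfold AbsRing_ball, abs, minus, plus, opp; simpl; lra.
Qed.
Lemma Cmod_of_ball (x y : C) (e : R) : @ball C_CompleteNormedModule x e y -> (Cmod (y - x) < 2 * e)%R.
Proof. intros [H1 H2]. unfold ball in H1, H2; simpl in H1, H2.
  unfold AbsRing_ball, abs, minus, plus, opp in H1, H2; simpl in H1, H2.
  pose proof (Cmod_le_ReIm (y - x)). simpl in H. unfold Re, Im in H; simpl in H. lra. Qed.
Section QP.
Variable q : C.
Hypothesis hr : (Cmod q < 1)%R.
Let r := Cmod q.
Lemma r_ge0 : (0 <= r)%R. Proof. apply Cmod_ge_0. Qed.
Lemma r_lt1 : (r < 1)%R. Proof. exact hr. Qed.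

Lemma P_bound x n : (Cmod (qpoch_part x q n) <= exp (Cmod x * (1 - r ^ n) / (1 - r)))%R.
Proof. pose proof r_ge0; pose proof r_lt1. induction n; simpl.
  - rewrite Cmod_1. replace (Cmod x * (1 - 1) / (1 - r))%R with 0%R by (field; lra). rewrite exp_0; lra.
  - rewrite Cmod_mult. pose proof (Cmod_1m_le (x * Cpown q n)) as Hc.
    rewrite Cmod_mult, Cmod_Cpown in Hc. fold r in Hc.
    pose proof (exp_ineq1_le (Cmod x * r ^ n)) as He.
    replace (Cmod x * (1 - r * r ^ n) / (1 - r))%R with (Cmod x * (1 - r ^ n) / (1 - r) + Cmod x * r ^ n)%R by (field; lra).
    rewrite exp_plus. apply Rmult_le_compat; try apply Cmod_ge_0. all: try lra.
Qed.
Definition Mb x := exp (Cmod x / (1 - r)).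
Lemma P_bound' x n : (Cmod (qpoch_part x q n) <= Mb x)%R.
Proof. pose proof r_ge0; pose proof r_lt1. eapply Rle_trans. apply P_bound. unfold Mb.
  apply exp_le'. pose proof (pow_le r n H). pose proof (Cmod_ge_0 x).
  unfold Rdiv. apply Rmult_le_compat_r. left; apply Rinv_0_lt_compat; lra.
  assert (0 <= Cmod x * r ^ n)%R by (apply Rmult_le_pos; lra). nra.
Qed.
Lemma P_diff x n : (Cmod (qpoch_part x q (S n) - qpoch_part x q n) <= Mb x * Cmod x * r ^ n)%R.
Proof. simpl. replace (qpoch_part x q n * (1 - x * Cpown q n) - qpoch_part x q n)
   with (qpoch_part x q n * (- (x * Cpown q n))) by ring.
  rewrite Cmod_mult, Cmod_opp, Cmod_mult, Cmod_Cpown. fold r.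
  rewrite <- Rmult_assoc. apply Rmult_le_compat_r. apply pow_le, r_ge0.
  apply Rmult_le_compat_r. apply Cmod_ge_0. apply P_bound'. Qed.
Lemma P_tail x n k : (Cmod (qpoch_part x q (n + k) - qpoch_part x q n) <= Mb x * Cmod x * r ^ n * (1 - r ^ k) / (1 - r))%R.
Proof. pose proof r_ge0; pose proof r_lt1. induction k.
  - rewrite Nat.add_0_r. replace (qpoch_part x q n - qpoch_part x q n) with (RtoC 0) by ring.
    rewrite Cmod_0. simpl. replace (Mb x * Cmod x * r ^ n * (1 - 1) / (1 - r))%R with 0%R by (field; lra). lra.
  - replace (qpoch_part x q (n + S k) - qpoch_part x q n) with
     ((qpoch_part x q (S (n + k)) - qpoch_part x q (n+k)) + (qpoch_part x q (n + k) - qpoch_part x q n))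
     by (rewrite Nat.add_succ_r; ring).
    eapply Rle_trans. apply Cmod_triangle. pose proof (P_diff x (n + k)) as Hd.
    rewrite pow_add in Hd.
    replace (Mb x * Cmod x * r ^ n * (1 - r ^ S k) / (1 - r))%R with
      (Mb x * Cmod x * (r ^ n * r ^ k) + Mb x * Cmod x * r ^ n * (1 - r ^ k) / (1 - r))%R
      by (simpl; field; lra). lra.
Qed.
Lemma P_cauchy x eps : (0 < eps)%R -> exists N, forall n, (N <= n)%nat ->
   (Cmod (qpoch_part x q n - qpoch_part x q N) < eps)%R.
Proof. intro Heps. pose proof r_ge0; pose proof r_lt1.
  set (B := (Mb x * Cmod x)%R).
  assert (HB : (0 <= B)%R) by (unfold B, Mb; apply Rmult_le_pos; [left; apply exp_pos| apply Cmod_ge_0]).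
  assert (Hy : (0 < eps * (1 - r) / (B + 1))%R) by (apply Rdiv_lt_0_compat; nra).
  destruct (pow_lt_1_zero r ltac:(rewrite Rabs_pos_eq; lra) _ Hy) as [N HN].
  exists N. intros n Hn. replace n with (N + (n - N))%nat by lia.
  eapply Rle_lt_trans. apply P_tail. fold B.
  specialize (HN N (le_n _)). rewrite Rabs_pos_eq in HN by (apply pow_le; lra).
  pose proof (pow_le r (n - N) H). pose proof (pow_le r N H).
  assert (r ^ (n - N) <= 1)%R by (apply pow_le1'; lra).
  apply Rle_lt_trans with (B * (eps * (1 - r) / (B + 1)) / (1 - r))%R.
  unfold Rdiv. apply Rmult_le_compat_r. left; apply Rinv_0_lt_compat; lra.
  assert (0 <= B * r ^ N)%R by (apply Rmult_le_pos; lra).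
  assert (B * r ^ N * (1 - r ^ (n - N)) <= B * r^N)%R by nra.
  assert (B * r ^ N <= B * (eps * (1 - r) * / (B + 1)))%R. apply Rmult_le_compat_l; auto.
  left; exact HN. lra.
  replace (B * (eps * (1 - r) / (B + 1)) / (1 - r))%R with (eps * (B / (B + 1)))%R by (field; lra).
  assert (Ht : (B / (B + 1) < 1)%R) by (unfold Rdiv; apply Rmult_lt_reg_r with (B+1)%R; [lra|]; rewrite Rmult_assoc, Rinv_l by lra; lra). set (t := (B / (B + 1))%R) in *. nra.
Qed.
Definition cvC (u : nat -> C) (L : C) := forall eps, (0 < eps)%R ->
  exists N, forall n, (N <= n)%nat -> (Cmod (u n - L) < eps)%R.
Lemma qpoch_cv x : cvC (qpoch_part x q) (qpoch x q).
Proof.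
  set (F := filtermap (qpoch_part x q) eventually).
  assert (Hc : cauchy F).
  { intro eps. destruct (P_cauchy x eps (cond_pos eps)) as [N HN]. exists (qpoch_part x q N).
    unfold F, filtermap. exists N. intros n Hn. specialize (HN n Hn). apply ball_of_Cmod; auto. }
  intros eps Heps. assert (He2 : (0 < eps / 2)%R) by lra.
  destruct (@complete_cauchy C_CompleteNormedModule F (filtermap_proper_filter _ _ _ _ eventually_filter) Hc (mkposreal _ He2)) as [N HN].
  exists N. intros n Hn. specialize (HN n Hn). unfold qpoch. fold F.
  apply Cmod_of_ball in HN. simpl in HN. lra.
Qed.
Lemma cv_unique u L1 L2 : cvC u L1 -> cvC u L2 -> L1 = L2.
Proof. intros H1 H2. destruct (Req_dec (Cmod (L1 - L2)) 0) as [E|E].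
  - apply Cmod_eq_0 in E. replace L1 with (L1 - L2 + L2) by ring. rewrite E. ring.
  - pose proof (Cmod_ge_0 (L1 - L2)). assert (Hp : (0 < Cmod (L1 - L2) / 2)%R) by lra.
    destruct (H1 _ Hp) as [N1 HN1]. destruct (H2 _ Hp) as [N2 HN2].
    specialize (HN1 (N1 + N2)%nat ltac:(lia)). specialize (HN2 (N1 + N2)%nat ltac:(lia)).
    pose proof (Cmod_triangle (u (N1 + N2)%nat - L2) (- (u (N1 + N2)%nat - L1))).
    rewrite Cmod_opp in H0. replace (u (N1 + N2)%nat - L2 + - (u (N1 + N2)%nat - L1)) with (L1 - L2) in H0 by ring.
    lra. Qed.
Lemma cv_shift u L : cvC u L -> cvC (fun n => u (S n)) L.
Proof. intros H eps He. destruct (H eps He) as [N HN]. exists N. intros; apply HN; lia. Qed.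
Lemma cv_scal u L c : cvC u L -> cvC (fun n => c * u n) (c * L).
Proof. intros H eps He. pose proof (Cmod_ge_0 c).
  destruct (H (eps / (Cmod c + 1))%R) as [N HN]. apply Rdiv_lt_0_compat; lra.
  exists N. intros n Hn. specialize (HN n Hn).
  replace (c * u n - c * L) with (c * (u n - L)) by ring. rewrite Cmod_mult.
  apply Rle_lt_trans with (Cmod c * (eps / (Cmod c + 1)))%R.
  apply Rmult_le_compat_l; lra.
  replace (Cmod c * (eps / (Cmod c + 1)))%R with (eps * (Cmod c / (Cmod c + 1)))%R by (field; lra).
  assert (Ht : (Cmod c / (Cmod c + 1) < 1)%R) by (unfold Rdiv; apply Rmult_lt_reg_r with (Cmod c + 1)%R; [lra|]; rewrite Rmult_assoc, Rinv_l by lra; lra).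
  set (t := (Cmod c / (Cmod c + 1))%R) in *. assert (0 <= t)%R by (unfold t; apply Rdiv_le_0_compat; lra). nra. Qed.
Lemma cv_ext u v L : (forall n, u n = v n) -> cvC u L -> cvC v L.
Proof. intros E H eps He. destruct (H eps He) as [N HN]. exists N. intros n Hn. rewrite <- E. auto. Qed.
Lemma P_rec x n : qpoch_part x q (S n) = (1 - x) * qpoch_part (q * x) q n.
Proof. induction n. simpl. ring. change (qpoch_part x q (S (S n))) with (qpoch_part x q (S n) * (1 - x * Cpown q (S n))).
  rewrite IHn. simpl. ring. Qed.
Lemma qpoch_rec x : qpoch x q = (1 - x) * qpoch (q * x) q.
Proof. apply (cv_unique (fun n => qpoch_part x q (S n))). apply cv_shift, qpoch_cv.
  apply (cv_ext (fun n => (1 - x) * qpoch_part (q * x) q n)). intro; symmetry; apply P_rec.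
  apply cv_scal, qpoch_cv. Qed.
Lemma lb_ineq u v : (0 <= u -> u <= v -> v < 1 -> / exp (u / (1 - v)) <= 1 - u)%R.
Proof. intros. pose proof (exp_ineq1_le (u / (1 - v))). pose proof (exp_pos (u / (1 - v))).
  assert (u / (1 - v) * (1 - u) >= u)%R.
  { unfold Rdiv. replace (u * / (1 - v) * (1 - u))%R with (u * ((1 - u) / (1 - v)))%R by (field; lra).
    assert ((1 - u) / (1 - v) >= 1)%R. { unfold Rdiv. apply Rle_ge. apply Rmult_le_reg_r with (1 - v)%R. lra.
     rewrite Rmult_assoc, Rinv_l by lra. lra. } nra. }
  apply Rmult_le_reg_l with (exp (u / (1 - v))). auto. rewrite Rinv_r by lra. nra. Qed.
Lemma P_lower x n : (Cmod x < 1)%R ->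
  (exp (- (Cmod x / ((1 - r) * (1 - Cmod x)) * (1 - r ^ n))) <= Cmod (qpoch_part x q n))%R.
Proof. intro hx. pose proof r_ge0; pose proof r_lt1. pose proof (Cmod_ge_0 x). induction n; simpl.
  - rewrite Cmod_1. replace (- (Cmod x / ((1 - r) * (1 - Cmod x)) * (1 - 1)))%R with 0%R by ring. rewrite exp_0; lra.
  - rewrite Cmod_mult. pose proof (Cmod_1m_ge (x * Cpown q n)) as Hc.
    rewrite Cmod_mult, Cmod_Cpown in Hc. fold r in Hc.
    pose proof (pow_le r n H). assert (Hrn : (r ^ n <= 1)%R) by (apply pow_le1'; lra).
    pose proof (lb_ineq (Cmod x * r ^ n) (Cmod x) ltac:(nra) ltac:(nra) hx) as Hl.
    replace (- (Cmod x / ((1 - r) * (1 - Cmod x)) * (1 - r * r ^ n)))%R with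
      (- (Cmod x / ((1 - r) * (1 - Cmod x)) * (1 - r ^ n)) + - (Cmod x * r ^ n / (1 - Cmod x)))%R by (field; lra).
    rewrite exp_plus, (exp_Ropp (Cmod x * r ^ n / (1 - Cmod x))). apply Rmult_le_compat; try (left; apply exp_pos); try (left; apply Rinv_0_lt_compat, exp_pos). all: lra.
Qed.
Lemma qpoch_nz x : (Cmod x < 1)%R -> qpoch x q <> 0.
Proof. intros hx E. pose proof r_ge0; pose proof r_lt1. pose proof (Cmod_ge_0 x).
  set (K := (Cmod x / ((1 - r) * (1 - Cmod x)))%R).
  assert (HK : (0 <= K)%R) by (unfold K; apply Rdiv_le_0_compat; [lra| apply Rmult_lt_0_compat; lra]).
  destruct (qpoch_cv x (exp (- K)) (exp_pos _)) as [N HN]. specialize (HN N (le_n _)).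
  rewrite E in HN. replace (qpoch_part x q N - 0) with (qpoch_part x q N) in HN by ring.
  pose proof (P_lower x N hx). fold K in H2. pose proof (pow_le r N H).
  assert (Hrn : (r ^ N <= 1)%R) by (apply pow_le1'; lra).
  assert (exp (- K) <= exp (- (K * (1 - r ^ N))))%R by (apply exp_le'; nra). lra. Qed.
End QP.
Lemma theta_q (q x : C) : (Cmod q < 1)%R -> q <> 0 -> x <> 0 -> theta q (q * x) = - / x * theta q x.
Proof. intros hr hq hx. unfold theta.
  replace (q / (q * x)) with (/ x) by (field; split; auto).
  rewrite (qpoch_rec q hr (/ x)), (qpoch_rec q hr x).
  unfold Cdiv. field. auto. Qed.
Lemma theta_nz (q y : C) : (Cmod q < Cmod y)%R -> (Cmod y < 1)%R -> theta q y <> 0.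
Proof. intros h1 h2. pose proof (Cmod_ge_0 q).
  assert (hy : y <> 0) by (intro E; rewrite E, Cmod_0 in h1; lra).
  assert (hr : (Cmod q < 1)%R) by lra.
  assert (Hd : (Cmod (q / y) < 1)%R).
  { rewrite Cmod_div by auto. apply Rmult_lt_reg_r with (Cmod y). lra. unfold Rdiv. rewrite Rmult_assoc, Rinv_l. lra.
    intro E; rewrite E in h1; lra. }
  unfold theta. repeat apply Cmult_neq_0; apply qpoch_nz; auto. Qed.
Definition tt : C := RtoC 2 * RtoC PI * Ci.
Lemma sinZ (n : Z) : sin (IZR n * PI) = 0%R.
Proof. apply sin_eq_0_1. exists n; reflexivity. Qed.
Ltac clean_trig n := 
  repeat match goal with |- context[exp ?a] => progress replace a with 0%R by field end;
  repeat match goal with |- context[cos ?a] => progress replace a with (IZR n * PI)%R by field end;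
  repeat match goal with |- context[sin ?a] => progress replace a with (IZR n * PI)%R by field end.
Lemma Cexp_iZ (n : Z) : Cexp (RtoC (IZR n / 2) * tt) = RtoC (cos (IZR n * PI)).
Proof. unfold Cexp, tt. apply injective_projections; simpl; clean_trig n;
  rewrite exp_0, sinZ; ring. Qed.
Lemma Cexp_tt : Cexp tt = 1.
Proof. replace tt with (RtoC (IZR 2 / 2) * tt) by (unfold tt; apply injective_projections; simpl; field).
  rewrite Cexp_iZ. replace (IZR 2 * PI)%R with (2 * PI)%R by reflexivity. rewrite cos_2PI. reflexivity. Qed.
Definition Tm (tau E : C) (r : R) (c : C) (w : C) : C :=
  E * Cexp (RtoC r * w) * theta (qpow tau 1) (c * Cexp w).
Lemma qpow1 tau : qpow tau 1 = Cexp (sq tau).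
Proof. rewrite qpow_Cexp. f_equal. ring. Qed.
Lemma Tm_shift (tau E : C) (r : R) (c w : C) : (Cmod (qpow tau 1) < 1)%R -> c <> 0 ->
  Tm tau E r c (w + sq tau) * Cexp w = (- qpow tau r / c) * Tm tau E r c w.
Proof. intros hq hc. unfold Tm.
  replace (RtoC r * (w + sq tau)) with (RtoC r * w + RtoC r * sq tau) by ring.
  rewrite Cexp_plus, Cexp_plus, <- qpow_Cexp, <- qpow1.
  replace (c * (Cexp w * qpow tau 1)) with (qpow tau 1 * (c * Cexp w)) by ring.
  rewrite theta_q; auto. field. split; auto. apply Cexp_neq0.
  apply qpow_neq0. apply Cmult_neq_0; auto. apply Cexp_neq0. Qed.
Lemma Tm_rot (tau E : C) (n : Z) (c w : C) :
  Tm tau E (IZR n / 2) c (w + tt) = RtoC (cos (IZR n * PI)) * Tm tau E (IZR n / 2) c w.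
Proof. unfold Tm.
  replace (RtoC (IZR n / 2) * (w + tt)) with (RtoC (IZR n / 2) * w + RtoC (IZR n / 2) * tt) by ring.
  rewrite Cexp_plus, Cexp_plus, Cexp_iZ, Cexp_tt. replace (Cexp w * 1) with (Cexp w) by ring. ring. Qed.
Lemma coef_zero (tau E : C) (r : R) (c : C) : (0 < Cmod (qpow tau 1) < 1)%R -> c <> 0 ->
  (forall w, Tm tau E r c w = 0) -> E = 0.
Proof. intros [h0 h1] hc H. set (rq := Cmod (qpow tau 1)) in *.
  assert (hcm : (0 < Cmod c)%R). { pose proof (Cmod_ge_0 c). destruct H0; auto. symmetry in H0. apply Cmod_eq_0 in H0. tauto. }
  set (w0 := RtoC (ln (((1 + rq) / 2) / Cmod c))).
  specialize (H w0). unfold Tm in H.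
  assert (Hm : Cmod (c * Cexp w0) = ((1 + rq) / 2)%R).
  { rewrite Cmod_mult, Cmod_Cexp. unfold w0. simpl. rewrite exp_ln. field. lra.
    apply Rdiv_lt_0_compat; lra. }
  assert (Ht : theta (qpow tau 1) (c * Cexp w0) <> 0) by (apply theta_nz; rewrite Hm; fold rq; lra).
  destruct (classic (E = 0)) as [E0|E0]; auto. exfalso. revert H.
  apply Cmult_neq_0; auto. apply Cmult_neq_0; auto. apply Cexp_neq0. Qed.
Definition pp (l e cl ce : C) : C := (l - cl) * (e + ce) + (e - ce).
Lemma pp_self l e : pp l e l e = 0.
Proof. unfold pp. ring. Qed.
Lemma iso1 (T1 T2 T3 T4 : C -> C) (s t : C) (l1 l2 l3 l4 e1 e2 e3 e4 : C)
  (S1 : forall w, T1 (w + s) * Cexp w = l1 * T1 w)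
  (S2 : forall w, T2 (w + s) * Cexp w = l2 * T2 w)
  (S3 : forall w, T3 (w + s) * Cexp w = l3 * T3 w)
  (S4 : forall w, T4 (w + s) * Cexp w = l4 * T4 w)
  (R1 : forall w, T1 (w + t) = e1 * T1 w)
  (R2 : forall w, T2 (w + t) = e2 * T2 w)
  (R3 : forall w, T3 (w + t) = e3 * T3 w)
  (R4 : forall w, T4 (w + t) = e4 * T4 w)
  (H0 : forall w, T1 w + T2 w + T3 w + T4 w = 0)
  (P2 : pp l1 e1 l2 e2 <> 0) (P3 : pp l1 e1 l3 e3 <> 0) (P4 : pp l1 e1 l4 e4 <> 0) :
  forall w, T1 w = 0.
Proof.
  set (Good := fun b1 b2 b3 b4 => forall w, b1 * T1 w + b2 * T2 w + b3 * T3 w + b4 * T4 w = 0).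
  assert (GS : forall b1 b2 b3 b4, Good b1 b2 b3 b4 -> Good (b1 * l1) (b2 * l2) (b3 * l3) (b4 * l4)).
  { intros b1 b2 b3 b4 Hb w. specialize (Hb (w + s)).
    assert (X : (b1 * T1 (w + s) + b2 * T2 (w + s) + b3 * T3 (w + s) + b4 * T4 (w + s)) * Cexp w
      = b1 * (T1 (w + s) * Cexp w) + b2 * (T2 (w + s) * Cexp w) + b3 * (T3 (w + s) * Cexp w) + b4 * (T4 (w + s) * Cexp w)) by ring.
    rewrite Hb, S1, S2, S3, S4 in X. rewrite <- (Cmult_0_l (Cexp w)), X. ring. }
  assert (GR : forall b1 b2 b3 b4, Good b1 b2 b3 b4 -> Good (b1 * e1) (b2 * e2) (b3 * e3) (b4 * e4)).
  { intros b1 b2 b3 b4 Hb w. specialize (Hb (w + t)). rewrite R1, R2, R3, R4 in Hb. rewrite <- Hb. ring. }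
  assert (GP : forall cl ce b1 b2 b3 b4, Good b1 b2 b3 b4 ->
     Good (b1 * pp l1 e1 cl ce) (b2 * pp l2 e2 cl ce) (b3 * pp l3 e3 cl ce) (b4 * pp l4 e4 cl ce)).
  { intros cl ce b1 b2 b3 b4 Hb w.
    pose proof (GR _ _ _ _ (GS _ _ _ _ Hb) w) as Y1. pose proof (GS _ _ _ _ Hb w) as Y2.
    pose proof (GR _ _ _ _ Hb w) as Y3. pose proof (Hb w) as Y4. unfold pp.
    transitivity ((b1 * l1 * e1 * T1 w + b2 * l2 * e2 * T2 w + b3 * l3 * e3 * T3 w + b4 * l4 * e4 * T4 w)
      + ce * (b1 * l1 * T1 w + b2 * l2 * T2 w + b3 * l3 * T3 w + b4 * l4 * T4 w)
      - cl * (b1 * e1 * T1 w + b2 * e2 * T2 w + b3 * e3 * T3 w + b4 * e4 * T4 w)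
      - cl * ce * (b1 * T1 w + b2 * T2 w + b3 * T3 w + b4 * T4 w)
      + (b1 * e1 * T1 w + b2 * e2 * T2 w + b3 * e3 * T3 w + b4 * e4 * T4 w)
      - ce * (b1 * T1 w + b2 * T2 w + b3 * T3 w + b4 * T4 w)). ring.
    rewrite Y1, Y2, Y3, Y4. ring. }
  assert (G0 : Good 1 1 1 1). { intro w. rewrite <- (H0 w). ring. }
  pose proof (GP l4 e4 _ _ _ _ (GP l3 e3 _ _ _ _ (GP l2 e2 _ _ _ _ G0))) as G.
  intro w. specialize (G w). rewrite !pp_self in G.
  assert (G' : (1 * pp l1 e1 l2 e2 * pp l1 e1 l3 e3 * pp l1 e1 l4 e4) * T1 w = 0) by (rewrite <- G; ring).
  destruct (classic (T1 w = 0)) as [Z|Z]; auto. exfalso. revert G'.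
  repeat apply Cmult_neq_0; auto. intro E; apply (f_equal fst) in E; simpl in E; lra.
Qed.
Lemma RtoC_neq (x y : R) : x <> y -> RtoC x <> RtoC y.
Proof. intros H E. apply (f_equal fst) in E. simpl in E. auto. Qed.
Lemma pp_nz l e cl ce : (e = RtoC 1 \/ e = RtoC (-1)) -> (ce = RtoC 1 \/ ce = RtoC (-1)) ->
  (l <> cl \/ e = - ce) -> pp l e cl ce <> 0.
Proof. intros He Hce Hd. unfold pp.
  destruct He as [He|He], Hce as [Hc|Hc]; subst e ce.
  - replace ((l - cl) * (RtoC 1 + RtoC 1) + (RtoC 1 - RtoC 1)) with ((l - cl) * RtoC 2) by (apply injective_projections; simpl; ring).
    apply Cmult_neq_0. intro E. destruct Hd as [Hd|Hd]. apply Hd. replace l with (l - cl + cl) by ring. rewrite E; ring.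
    revert Hd. rewrite <- RtoC_opp. apply RtoC_neq. lra. apply RtoC_neq; lra.
  - replace ((l - cl) * (RtoC 1 + RtoC (-1)) + (RtoC 1 - RtoC (-1))) with (RtoC 2).
    apply RtoC_neq; lra. apply injective_projections; simpl; ring.
  - replace ((l - cl) * (RtoC (-1) + RtoC 1) + (RtoC (-1) - RtoC 1)) with (RtoC (-2)).
    apply RtoC_neq; lra. apply injective_projections; simpl; ring.
  - replace ((l - cl) * (RtoC (-1) + RtoC (-1)) + (RtoC (-1) - RtoC (-1))) with ((l - cl) * RtoC (-2)) by (apply injective_projections; simpl; ring).
    apply Cmult_neq_0. intro E. destruct Hd as [Hd|Hd]. apply Hd. replace l with (l - cl + cl) by ring. rewrite E; ring.
    revert Hd. rewrite <- RtoC_opp. apply RtoC_neq. lra. apply RtoC_neq; lra.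
Qed.
Lemma alpha_neg tau : (Cmod (qpow tau 1) < 1)%R -> (alpha tau < 0)%R.
Proof. intro h. rewrite Cmod_qpow, Rmult_1_r in h. rewrite <- exp_0 in h. apply exp_lt_inv in h. exact h. Qed.
Lemma qpow_inj tau x y : (Cmod (qpow tau 1) < 1)%R -> qpow tau x = qpow tau y -> x = y.
Proof. intros h E. apply (f_equal Cmod) in E. rewrite !Cmod_qpow in E. apply exp_inv in E.
  pose proof (alpha_neg tau h). apply Rmult_eq_reg_l in E; auto. lra. Qed.
Lemma C_eq_opp_0 (X : C) : X = - X -> X = 0.
Proof. destruct X as [x y]. intro H. apply injective_projections; simpl;
  [apply (f_equal fst) in H | apply (f_equal snd) in H]; simpl in H; lra. Qed.
Lemma qpow_opp_neq tau x y : (Cmod (qpow tau 1) < 1)%R -> qpow tau x <> - qpow tau y.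
Proof. intros h E. assert (E2 : x = y).
  { apply (f_equal Cmod) in E. rewrite Cmod_opp, !Cmod_qpow in E. apply exp_inv in E.
    pose proof (alpha_neg tau h). apply Rmult_eq_reg_l in E; auto. lra. }
  subst. apply C_eq_opp_0 in E. revert E. apply qpow_neq0. Qed.
Lemma div_cross (x y b d : C) : b <> 0 -> d <> 0 -> x / b = y / d -> x * d = y * b.
Proof. intros hb hd E. replace x with (x / b * b) by (field; auto).
  replace y with (y / d * d) by (field; auto). rewrite E. field; auto. Qed.
Lemma lab_rel tau (s1 s2 a : C) u1 v1 u2 v2 : a <> 0 -> s1 <> 0 -> s2 <> 0 ->
  - qpow tau u1 / (s1 * qpow tau v1 * a) = - qpow tau u2 / (s2 * qpow tau v2 * a) ->
  s2 * qpow tau (u1 + v2) = s1 * qpow tau (u2 + v1).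
Proof. intros ha h1 h2 E. apply div_cross in E.
  rewrite !qpow_plus. transitivity (- (- qpow tau u1 * (s2 * qpow tau v2 * a)) / a).
  field; auto. rewrite E. field; auto.
  apply Cmult_neq_0; [apply Cmult_neq_0; [auto| apply qpow_neq0] | auto].
  apply Cmult_neq_0; [apply Cmult_neq_0; [auto| apply qpow_neq0] | auto]. Qed.
Lemma cos_sq (n : Z) : (cos (IZR n * PI) = 1 \/ cos (IZR n * PI) = -1)%R.
Proof. pose proof (sin2_cos2 (IZR n * PI)). rewrite sinZ in H. unfold Rsqr in H.
  assert ((cos (IZR n * PI) - 1) * (cos (IZR n * PI) + 1) = 0)%R by nra.
  apply Rmult_integral in H0. destruct H0; [left|right]; lra. Qed.
Lemma cos_par (n l j : Z) : (n + l = 2 * j + 1)%Z -> cos (IZR n * PI) = (- cos (IZR l * PI))%R.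
Proof. intro H. assert (E : cos (IZR (n + l) * PI) = (-1)%R).
  { rewrite H, plus_IZR, mult_IZR. replace ((2 * IZR j + 1) * PI)%R with (2 * (IZR j * PI) + PI)%R by ring.
    rewrite neg_cos, cos_2a_sin, sinZ. ring. }
  rewrite plus_IZR, Rmult_plus_distr_r, cos_plus, !sinZ in E.
  pose proof (cos_sq l). destruct H0 as [H0|H0]; rewrite H0 in *; lra. Qed.
Lemma one_neq0 : (1 : C) <> 0.
Proof. intro E; apply (f_equal fst) in E; simpl in E; lra. Qed.
Lemma mone_neq0 : (- 1 : C) <> 0.
Proof. intro E; apply (f_equal fst) in E; simpl in E; lra. Qed.
Lemma pp_nz2 l e cl ce : (e = RtoC 1 \/ e = RtoC (-1)) -> (ce = RtoC 1 \/ ce = RtoC (-1)) ->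
  (l <> cl \/ e = - ce) -> pp l e cl ce <> 0 /\ pp cl ce l e <> 0.
Proof. intros h1 h2 h3. split. apply pp_nz; auto. apply pp_nz; auto.
  destruct h3 as [h|h]. left; auto. right. rewrite h. ring. Qed.
Lemma eps_pm (n : Z) : RtoC (cos (IZR n * PI)) = RtoC 1 \/ RtoC (cos (IZR n * PI)) = RtoC (-1).
Proof. destruct (cos_sq n) as [h|h]; rewrite h; auto. Qed.

Theorem mainTheorem3 (tau a b c A B C0 D : C) (n m l k N M L K : Z)
  (hq : (0 < Cmod (qpow tau 1) < 1)%R)
  (ha : a <> 0) (hb : b <> 0) (hc : c <> 0)
  (hna : ~ in_qZ tau a 1) (hnb : ~ in_qZ tau b 1) (hnc : ~ in_qZ tau c 1)
  (hnab : ~ in_qZ tau (a / b) 1) (hnac : ~ in_qZ tau (a / c) 1)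
  (hnbc : ~ in_qZ tau (b / c) 1)
  (hsets : forall x : C,
      (in_qZ tau x a \/ in_qZ tau x b \/ in_qZ tau x (a * qpow tau 1 / c)
       \/ in_qZ tau x (b * qpow tau 1 / c))
      <->
      (in_qZ tau x a \/ in_qZ tau x (- a) \/ in_qZhalf tau x a
       \/ in_qZhalf tau x (- a)))
  (hid : forall w : C,
      A * Cexp (RtoC (IZR n / 2) * w)
          * theta (qpow tau 1) (qpow tau (IZR N) * a * Cexp w)
      + B * Cexp (RtoC (IZR m / 2) * w)
          * theta (qpow tau 1) (- (qpow tau (IZR M) * a * Cexp w))
      + C0 * Cexp (RtoC (IZR l / 2) * w)
          * theta (qpow tau 1) (qpow tau (IZR L) * qpow tau (/2) * a * Cexp w)
      + D * Cexp (RtoC (IZR k / 2) * w)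
          * theta (qpow tau 1) (- (qpow tau (IZR K) * qpow tau (/2) * a * Cexp w))
      = 0) :
  A = 0 /\ B = 0 /\ C0 = 0 /\ D = 0.
Proof.
  destruct hq as [hq0 hq1].
  set (c1 := 1 * qpow tau (IZR N) * a).
  set (c2 := - 1 * qpow tau (IZR M) * a).
  set (c3 := 1 * qpow tau (IZR L + / 2) * a).
  set (c4 := - 1 * qpow tau (IZR K + / 2) * a).
  assert (hc1 : c1 <> 0) by (unfold c1; apply Cmult_neq_0; [apply Cmult_neq_0; [apply one_neq0| apply qpow_neq0]| auto]).
  assert (hc2 : c2 <> 0) by (unfold c2; apply Cmult_neq_0; [apply Cmult_neq_0; [apply mone_neq0| apply qpow_neq0]| auto]).
  assert (hc3 : c3 <> 0) by (unfold c3; apply Cmult_neq_0; [apply Cmult_neq_0; [apply one_neq0| apply qpow_neq0]| auto]).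
  assert (hc4 : c4 <> 0) by (unfold c4; apply Cmult_neq_0; [apply Cmult_neq_0; [apply mone_neq0| apply qpow_neq0]| auto]).
  set (T1 := Tm tau A (IZR n / 2) c1).
  set (T2 := Tm tau B (IZR m / 2) c2).
  set (T3 := Tm tau C0 (IZR l / 2) c3).
  set (T4 := Tm tau D (IZR k / 2) c4).
  assert (H0 : forall w, T1 w + T2 w + T3 w + T4 w = 0).
  { intro w. rewrite <- (hid w). unfold T1, T2, T3, T4, Tm, c1, c2, c3, c4. rewrite !qpow_plus.
    replace (1 * qpow tau (IZR N) * a * Cexp w) with (qpow tau (IZR N) * a * Cexp w) by ring.
    replace (- 1 * qpow tau (IZR M) * a * Cexp w) with (- (qpow tau (IZR M) * a * Cexp w)) by ring.
    replace (1 * (qpow tau (IZR L) * qpow tau (/ 2)) * a * Cexp w) with (qpow tau (IZR L) * qpow tau (/ 2) * a * Cexp w) by ring.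
    replace (- 1 * (qpow tau (IZR K) * qpow tau (/ 2)) * a * Cexp w) with (- (qpow tau (IZR K) * qpow tau (/ 2) * a * Cexp w)) by ring.
    reflexivity. }
  set (l1 := - qpow tau (IZR n / 2) / c1).
  set (l2 := - qpow tau (IZR m / 2) / c2).
  set (l3 := - qpow tau (IZR l / 2) / c3).
  set (l4 := - qpow tau (IZR k / 2) / c4).
  set (e1 := RtoC (cos (IZR n * PI))).
  set (e2 := RtoC (cos (IZR m * PI))).
  set (e3 := RtoC (cos (IZR l * PI))).
  set (e4 := RtoC (cos (IZR k * PI))).
  assert (S1 : forall w, T1 (w + sq tau) * Cexp w = l1 * T1 w) by (intro; apply Tm_shift; auto).
  assert (S2 : forall w, T2 (w + sq tau) * Cexp w = l2 * T2 w) by (intro; apply Tm_shift; auto).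
  assert (S3 : forall w, T3 (w + sq tau) * Cexp w = l3 * T3 w) by (intro; apply Tm_shift; auto).
  assert (S4 : forall w, T4 (w + sq tau) * Cexp w = l4 * T4 w) by (intro; apply Tm_shift; auto).
  assert (R1 : forall w, T1 (w + tt) = e1 * T1 w) by (intro; apply Tm_rot).
  assert (R2 : forall w, T2 (w + tt) = e2 * T2 w) by (intro; apply Tm_rot).
  assert (R3 : forall w, T3 (w + tt) = e3 * T3 w) by (intro; apply Tm_rot).
  assert (R4 : forall w, T4 (w + tt) = e4 * T4 w) by (intro; apply Tm_rot).
  pose proof (eps_pm n) as E1. pose proof (eps_pm m) as E2.
  pose proof (eps_pm l) as E3. pose proof (eps_pm k) as E4.
  fold e1 in E1. fold e2 in E2. fold e3 in E3. fold e4 in E4.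
  assert (D12 : l1 <> l2).
  { intro E. apply (lab_rel tau) in E; auto using one_neq0, mone_neq0.
    apply (qpow_opp_neq tau (IZR m / 2 + IZR N) (IZR n / 2 + IZR M) hq1).
    transitivity (1 * qpow tau (IZR m / 2 + IZR N)). ring. rewrite <- E. ring. }
  assert (D14 : l1 <> l4).
  { intro E. apply (lab_rel tau) in E; auto using one_neq0, mone_neq0.
    apply (qpow_opp_neq tau (IZR k / 2 + IZR N) (IZR n / 2 + (IZR K + / 2)) hq1).
    transitivity (1 * qpow tau (IZR k / 2 + IZR N)). ring. rewrite <- E. ring. }
  assert (D23 : l2 <> l3).
  { intro E. apply (lab_rel tau) in E; auto using one_neq0, mone_neq0.
    apply (qpow_opp_neq tau (IZR m / 2 + (IZR L + / 2)) (IZR l / 2 + IZR M) hq1).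
    transitivity (1 * qpow tau (IZR m / 2 + (IZR L + / 2))). ring. rewrite E. ring. }
  assert (D34 : l3 <> l4).
  { intro E. apply (lab_rel tau) in E; auto using one_neq0, mone_neq0.
    apply (qpow_opp_neq tau (IZR k / 2 + (IZR L + / 2)) (IZR l / 2 + (IZR K + / 2)) hq1).
    transitivity (1 * qpow tau (IZR k / 2 + (IZR L + / 2))). ring. rewrite <- E. ring. }
  assert (D13 : l1 <> l3 \/ e1 = - e3).
  { destruct (classic (l1 = l3)) as [E|E]; [right|left; auto].
    apply (lab_rel tau) in E; auto using one_neq0, mone_neq0.
    assert (E' : qpow tau (IZR n / 2 + (IZR L + / 2)) = qpow tau (IZR l / 2 + IZR N)).
    { transitivity (1 * qpow tau (IZR n / 2 + (IZR L + / 2))). ring. rewrite E. ring. }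
    apply qpow_inj in E'; auto.
    assert (Z1 : IZR (n + 2 * L + 1) = IZR (l + 2 * N)) by (rewrite !plus_IZR, !mult_IZR; lra).
    apply eq_IZR in Z1. unfold e1, e3. rewrite (cos_par n l (l + N - L - 1)) by lia.
    apply injective_projections; simpl; ring. }
  assert (D24 : l2 <> l4 \/ e2 = - e4).
  { destruct (classic (l2 = l4)) as [E|E]; [right|left; auto].
    apply (lab_rel tau) in E; auto using one_neq0, mone_neq0.
    assert (E' : qpow tau (IZR m / 2 + (IZR K + / 2)) = qpow tau (IZR k / 2 + IZR M)).
    { transitivity (- (- 1 * qpow tau (IZR m / 2 + (IZR K + / 2)))). ring. rewrite E. ring. }
    apply qpow_inj in E'; auto.
    assert (Z1 : IZR (m + 2 * K + 1) = IZR (k + 2 * M)) by (rewrite !plus_IZR, !mult_IZR; lra).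
    apply eq_IZR in Z1. unfold e2, e4. rewrite (cos_par m k (k + M - K - 1)) by lia.
    apply injective_projections; simpl; ring. }
  destruct (pp_nz2 l1 e1 l2 e2 E1 E2 (or_introl D12)) as [P12 P21].
  destruct (pp_nz2 l1 e1 l3 e3 E1 E3 D13) as [P13 P31].
  destruct (pp_nz2 l1 e1 l4 e4 E1 E4 (or_introl D14)) as [P14 P41].
  destruct (pp_nz2 l2 e2 l3 e3 E2 E3 (or_introl D23)) as [P23 P32].
  destruct (pp_nz2 l2 e2 l4 e4 E2 E4 D24) as [P24 P42].
  destruct (pp_nz2 l3 e3 l4 e4 E3 E4 (or_introl D34)) as [P34 P43].
  assert (Z1 : forall w, T1 w = 0)
    by (apply (iso1 T1 T2 T3 T4 (sq tau) tt l1 l2 l3 l4 e1 e2 e3 e4); auto).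
  assert (Z2 : forall w, T2 w = 0).
  { apply (iso1 T2 T1 T3 T4 (sq tau) tt l2 l1 l3 l4 e2 e1 e3 e4); auto.
    intro w; rewrite <- (H0 w); ring. }
  assert (Z3 : forall w, T3 w = 0).
  { apply (iso1 T3 T1 T2 T4 (sq tau) tt l3 l1 l2 l4 e3 e1 e2 e4); auto.
    intro w; rewrite <- (H0 w); ring. }
  assert (Z4 : forall w, T4 w = 0).
  { apply (iso1 T4 T1 T2 T3 (sq tau) tt l4 l1 l2 l3 e4 e1 e2 e3); auto.
    intro w; rewrite <- (H0 w); ring. }
  split; [|split; [|split]].
  - apply (coef_zero tau A (IZR n / 2) c1); auto.
  - apply (coef_zero tau B (IZR m / 2) c2); auto.
  - apply (coef_zero tau C0 (IZR l / 2) c3); auto.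
  - apply (coef_zero tau D (IZR k / 2) c4); auto.
Qed.
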